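(* For every cograph $(V,E)$ there are $d<\omega$ and an injective function $f:V\to(2^2)^d$ such that for all distinct $v_0,v_1\in V$: $v_0\mathrel{E}v_1$ if and only if $\{f(v_0),f(v_1)\}$ is an up-$1$-comb, and $\neg\, v_0\mathrel{E}v_1$ if and only if $\{f(v_0),f(v_1)\}$ is a wide right-$1$-comb.
   Context: Cographs: for graphs $G_0=(V_0,E_0),G_1=(V_1,E_1)$ on disjoint vertex sets, the coproduct is $(V_0\cup V_1,E_0\cup E_1)$ and the graph join is $(V_0\cup V_1,E_0\cup E_1\cup\{\{a,b\}:a\in V_0,b\in V_1\})$; cographs form the smallest class of graphs containing the one-vertex graph and closed (up to isomorphism) under coproducts and graph joins. $2^2=\{0,1\}^2$; $(2^2)^d$ is the set of sequences of length $d$ with entries in $2^2$, $(2^2)^{<d}$ those of length $<d$, $\tau^\frown a$ concatenation. For $A,B\subseteq(2^2)^d$: $A$ narrowly below $B$: some $\tau\in(2^2)^{<d}$, $i<2$ with all elements of $A$ extending $\tau^\frown(i,0)$ and all of $B$ extending $\tau^\frown(i,1)$; $A$ narrowly to the left of $B$: some $\tau$, $j<2$ with $A$'s extending $\tau^\frown(0,j)$ and $B$'s extending $\tau^\frown(1,j)$; $A$ widely to the left of $B$: some $\sigma$ with $A$'s extending $\sigma^\frown(0,0)$ or $\sigma^\frown(0,1)$ and $B$'s extending $\sigma^\frown(1,0)$ or $\sigma^\frown(1,1)$. Up-$1$-combs: smallest class of finite sets containing singletons and containing $A\cup B$ whenever $A,B$ are up-$1$-combs, $|A|\le 1$, $A$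 narrowly below $B$; right-$1$-combs likewise with narrowly left; wide right-$1$-combs: smallest class containing singletons and containing $A\cup B$ whenever $A,B$ are right-$1$-combs, $|A|\le1$, $A$ widely left of $B$. *)

(* Defs.v *)
From mathcomp Require Import all_boot.
Set Implicit Arguments. Unset Strict Implicit. Unset Printing Implicit Defensive.

Definition coprod_rel (T1 T2 : finType) (e1 : rel T1) (e2 : rel T2) : rel (T1 + T2) :=
  fun x y => match x, y with
             | inl a, inl b => e1 a b
             | inr a, inr b => e2 a b
             | _, _ => false
             end.

Definition join_rel (T1 T2 : finType) (e1 : rel T1) (e2 : rel T2) : rel (T1 + T2) :=
  fun x y => match x, y with
             | inl a, inl b => e1 a b
             | inr a, inr b => e2 a b
             | _, _ => true
             end.

Inductive cograph : forall T : finType, rel T -> Prop :=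
| cograph_single : cograph (fun _ _ : unit => false)
| cograph_iso (T1 T2 : finType) (e1 : rel T1) (e2 : rel T2) (f : T1 -> T2) :
    bijective f -> (forall x y, e2 (f x) (f y) = e1 x y) ->
    cograph e1 -> cograph e2
| cograph_coprod (T1 T2 : finType) (e1 : rel T1) (e2 : rel T2) :
    cograph e1 -> cograph e2 -> cograph (coprod_rel e1 e2)
| cograph_join (T1 T2 : finType) (e1 : rel T1) (e2 : rel T2) :
    cograph e1 -> cograph e2 -> cograph (join_rel e1 e2).

(** * Sequences in (2^2)^d, with 2^2 = bool * bool (false = 0, true = 1) *)

Notation seq22 d := (d.-tuple (bool * bool)).

Definition narrowly_below (d : nat) (A B : {set seq22 d}) : Prop :=
  exists (tau : seq (bool * bool)) (i : bool),
    size tau < d /\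
    (forall a, a \in A -> prefix (rcons tau (i, false)) a) /\
    (forall b, b \in B -> prefix (rcons tau (i, true)) b).

Definition narrowly_left (d : nat) (A B : {set seq22 d}) : Prop :=
  exists (tau : seq (bool * bool)) (j : bool),
    size tau < d /\
    (forall a, a \in A -> prefix (rcons tau (false, j)) a) /\
    (forall b, b \in B -> prefix (rcons tau (true, j)) b).

Definition widely_left (d : nat) (A B : {set seq22 d}) : Prop :=
  exists sigma : seq (bool * bool),
    (forall a, a \in A -> exists j : bool, prefix (rcons sigma (false, j)) a) /\
    (forall b, b \in B -> exists j : bool, prefix (rcons sigma (true, j)) b).

Inductive up1comb (d : nat) : {set seq22 d} -> Prop :=
| up1comb_single (x : seq22 d) : up1comb [set x]
| up1comb_union (A B : {set seq22 d}) :
    up1comb A -> up1comb B -> #|A| <= 1 -> narrowly_below A B ->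
    up1comb (A :|: B).

Inductive right1comb (d : nat) : {set seq22 d} -> Prop :=
| right1comb_single (x : seq22 d) : right1comb [set x]
| right1comb_union (A B : {set seq22 d}) :
    right1comb A -> right1comb B -> #|A| <= 1 -> narrowly_left A B ->
    right1comb (A :|: B).

(** wide right-1-combs: as in the paper, the parts A, B are right-1-combs *)
Inductive wide_right1comb (d : nat) : {set seq22 d} -> Prop :=
| wide_right1comb_single (x : seq22 d) : wide_right1comb [set x]
| wide_right1comb_union (A B : {set seq22 d}) :
    right1comb A -> right1comb B -> #|A| <= 1 -> widely_left A B ->
    wide_right1comb (A :|: B).

(* Main.v *)
Require Import Defs.
From mathcomp Require Import all_boot.
Set Implicit Arguments. Unset Strict Implicit. Unset Printing Implicit Defensive.

Fixpoint sameF (x y : seq (bool * bool)) : bool :=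
  match x, y with
  | a :: x', b :: y' => if a == b then sameF x' y' else a.1 == b.1
  | _, _ => false
  end.

Lemma sameF_sym x y : sameF x y = sameF y x.
Proof.
elim: x y => [|a x IH] [|b y] //=.
by rewrite (eq_sym b a) (eq_sym b.1 a.1) IH.
Qed.

Lemma sameF_pre tau p q x y : p != q -> prefix (rcons tau p) x ->
  prefix (rcons tau q) y -> sameF x y = (p.1 == q.1).
Proof.
move=> npq; elim: tau x y => [|t tau IH] [|a x] [|b y] //=.
- move=> /andP[/eqP <- _] /andP[/eqP <- _]; by rewrite (negbTE npq).
- move=> /andP[/eqP <- H1] /andP[/eqP <- H2]; rewrite eqxx; exact: IH.
Qed.

Lemma pre_neq tau p q (x : seq (bool * bool)) : p != q -> prefix (rcons tau p) x ->
  prefix (rcons tau q) x -> False.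
Proof.
move=> npq; elim: tau x => [|t tau IH] [|a x] //=.
- by move=> /andP[/eqP <- _] /andP[/eqP E _]; rewrite E eqxx in npq.
- by move=> /andP[_ H1] /andP[_ H2]; exact: IH H1 H2.
Qed.

Lemma sameF_ex (x y : seq (bool * bool)) : size x = size y -> x != y ->
  exists tau p q, [/\ p != q, prefix (rcons tau p) x,
                      prefix (rcons tau q) y & size tau < size x].
Proof.
elim: x y => [|a x IH] [|b y] //= [] Hs.
case: (eqVneq a b) => [<-|nab].
- rewrite eqseq_cons eqxx /= => nxy.
  have [tau [p [q [npq H1 H2 H3]]]] := IH _ Hs nxy.
  exists (a :: tau), p, q; split => //=; by rewrite eqxx.
- move=> _; exists [::], a, b; split => //=; by rewrite eqxx prefix0s.
Qed.


Lemma up1comb_ne d (S : {set seq22 d}) : up1comb S -> exists z, z \in S.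
Proof.
elim=> [z|A B _ [z Hz] _ _ _ _]; first by exists z; rewrite set11.
by exists z; rewrite inE Hz.
Qed.

Lemma right1comb_ne d (S : {set seq22 d}) : right1comb S -> exists z, z \in S.
Proof.
elim=> [z|A B _ [z Hz] _ _ _ _]; first by exists z; rewrite set11.
by exists z; rewrite inE Hz.
Qed.

Lemma pair_cases d (x y a b : seq22 d) : a \in [set x; y] -> b \in [set x; y] ->
  a != b -> (a = x /\ b = y) \/ (a = y /\ b = x).
Proof.
rewrite !inE => /orP[] /eqP ea /orP[] /eqP eb; subst a b; rewrite ?eqxx //; auto.
Qed.

Lemma singleton_pair d (x y z : seq22 d) : x != y -> [set z] <> [set x; y].
Proof.
move=> nxy E.
have hx : x \in [set z] by rewrite E !inE eqxx.
have hy : y \in [set z] by rewrite E !inE eqxx orbT.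
move: hx hy; rewrite !inE => /eqP ex /eqP ey; by rewrite ex ey eqxx in nxy.
Qed.

Lemma up1_pair d (x y : seq22 d) : x != y ->
  up1comb [set x; y] <-> sameF x y.
Proof.
move=> nxy; split.
- move Es: [set x; y] => S H; case: H Es => [z|A B HA HB _ [tau [i [_ [Ha Hb]]]]] Es.
    by case: (@singleton_pair _ x y z nxy (esym Es)).
  have [a Ha'] := up1comb_ne HA; have [b Hb'] := up1comb_ne HB.
  have ea : sameF a b = ((i, false).1 == (i, true).1).
    by apply: (sameF_pre (tau := tau)); [rewrite xpair_eqE eqxx | exact: Ha | exact: Hb].
  have nab : a != b.
    apply/negP => /eqP eab; move: (Ha a Ha') (Hb b Hb'); rewrite -eab.
    by apply: pre_neq; rewrite xpair_eqE eqxx.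
  have aS : a \in [set x; y] by rewrite Es inE Ha'.
  have bS : b \in [set x; y] by rewrite Es inE Hb' orbT.
  case: (pair_cases aS bS nab) => [[<- <-]|[<- <-]]; first by rewrite ea /= eqxx.
  by rewrite sameF_sym ea /= eqxx.
- move=> hs.
  have [tau [p [q [npq H1 H2 H3]]]] := sameF_ex (etrans (size_tuple x) (esym (size_tuple y))) nxy.
  have e1 := sameF_pre npq H1 H2; rewrite hs in e1.
  move: p q npq H1 H2 e1 => [i j] [i' j'] npq H1 H2 /= /esym /eqP ei; subst i'.
  have hd : size tau < d by rewrite size_tuple in H3.
  case: j j' npq H1 H2 => [] []; rewrite ?eqxx // => _ H1 H2.
  + rewrite setUC.
    apply: up1comb_union; [exact: up1comb_single | exact: up1comb_single | by rewrite cards1 |].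
    exists tau, i; split; [done | split => z; rewrite inE => /eqP -> //].
  + apply: up1comb_union; [exact: up1comb_single | exact: up1comb_single | by rewrite cards1 |].
    exists tau, i; split; [done | split => z; rewrite inE => /eqP -> //].
Qed.

Lemma wide_pair d (x y : seq22 d) : x != y ->
  wide_right1comb [set x; y] <-> ~~ sameF x y.
Proof.
move=> nxy; split.
- move Es: [set x; y] => S H; case: H Es => [z|A B HA HB _ [sig [Ha Hb]]] Es.
    by case: (@singleton_pair _ x y z nxy (esym Es)).
  have [a Ha'] := right1comb_ne HA; have [b Hb'] := right1comb_ne HB.
  have [j Hj] := Ha a Ha'; have [j' Hj'] := Hb b Hb'.
  have ea : sameF a b = ((false, j).1 == (true, j').1).
    by apply: (sameF_pre (tau := sig)) => //; rewrite xpair_eqE.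
  have nab : a != b.
    apply/negP => /eqP eab; move: Hj Hj'; rewrite -eab.
    by apply: pre_neq; rewrite xpair_eqE.
  have aS : a \in [set x; y] by rewrite Es inE Ha'.
  have bS : b \in [set x; y] by rewrite Es inE Hb' orbT.
  case: (pair_cases aS bS nab) => [[<- <-]|[<- <-]]; first by rewrite ea.
  by rewrite sameF_sym ea.
- move=> hs.
  have [tau [p [q [npq H1 H2 H3]]]] := sameF_ex (etrans (size_tuple x) (esym (size_tuple y))) nxy.
  have e1 := sameF_pre npq H1 H2; rewrite (negbTE hs) in e1.
  move: p q npq H1 H2 e1 => [i j] [i' j'] /= _ H1 H2 e1.
  case: i i' H1 H2 e1 => [] [] H1 H2 e1; try discriminate.
  + rewrite setUC.
    apply: wide_right1comb_union; [exact: right1comb_single | exact: right1comb_single | by rewrite cards1 |].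
    exists tau; split => z; rewrite inE => /eqP ->; by eauto.
  + apply: wide_right1comb_union; [exact: right1comb_single | exact: right1comb_single | by rewrite cards1 |].
    exists tau; split => z; rewrite inE => /eqP ->; by eauto.
Qed.

Definition good (T : finType) (e : rel T) :=
  exists d0, forall d, d0 <= d -> exists f : T -> d.-tuple (bool * bool),
    injective f /\ forall v0 v1, v0 != v1 -> e v0 v1 = sameF (f v0) (f v1).

Lemma sum_good (T1 T2 : finType) (e1 : rel T1) (e2 : rel T2) (E : rel (T1 + T2))
  (c : bool * bool) : c != (false, false) ->
  (forall a b, E (inl a) (inl b) = e1 a b) -> (forall a b, E (inr a) (inr b) = e2 a b) ->
  (forall a b, E (inl a) (inr b) = (false == c.1)) ->
  (forall a b, E (inr b) (inl a) = (c.1 == false)) ->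
  good e1 -> good e2 -> good E.
Proof.
move=> hc H11 H22 H12 H21 [d1 G1] [d2 G2]; exists (maxn d1 d2).+1 => [[|d]] //.
rewrite ltnS geq_max => /andP[l1 l2].
have [f1 [i1 s1]] := G1 _ l1; have [f2 [i2 s2]] := G2 _ l2.
exists (fun z => match z with inl a => cons_tuple (false, false) (f1 a)
                 | inr b => cons_tuple c (f2 b) end); split.
- move=> [a|a] [b|b] /(congr1 val) /= [].
  + by move=> /val_inj /i1 ->.
  + by move=> E'; rewrite E' eqxx in hc.
  + by move=> E'; rewrite E' eqxx in hc.
  + by move=> /val_inj /i2 ->.
- move=> [a|a] [b|b] nab /=.
  + by rewrite ?eqxx H11 s1 //; apply: contraNneq nab => ->.
  + by rewrite eq_sym (negbTE hc) H12.
  + by rewrite (negbTE hc) H21.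
  + by rewrite ?eqxx H22 s2 //; apply: contraNneq nab => ->.
Qed.

Lemma cog_good (T : finType) (e : rel T) : cograph e -> good e.
Proof.
elim=> {T e}.
- exists 0 => d _; exists (fun _ => [tuple of nseq d (false, false)]); split.
    by move=> [] [].
  by move=> [] [].
- move=> T1 T2 e1 e2 f [g fK gK] he _ [d0 G]; exists d0 => d /G [f1 [i1 s1]].
  exists (f1 \o g); split.
    by apply: inj_comp => //; exact: can_inj gK.
  move=> v0 v1 nv /=.
  rewrite -{1}(gK v0) -{1}(gK v1) he s1 //.
  by rewrite (inj_eq (can_inj gK)).
- move=> T1 T2 e1 e2 _ G1 _ G2.
  by apply: (@sum_good _ _ e1 e2 _ (true, false)) => //.
- move=> T1 T2 e1 e2 _ G1 _ G2.
  by apply: (@sum_good _ _ e1 e2 _ (false, true)) => //.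
Qed.

Theorem lemma4p6 (T : finType) (e : rel T) :
  cograph e ->
  exists (d : nat) (f : T -> d.-tuple (bool * bool)),
    injective f /\
    forall v0 v1 : T, v0 != v1 ->
      (e v0 v1 <-> up1comb [set f v0; f v1]) /\
      (~ e v0 v1 <-> wide_right1comb [set f v0; f v1]).
Proof.
move=> /cog_good [d0 G]; have [f [fi fs]] := G d0 (leqnn _).
exists d0, f; split => // v0 v1 nv.
have nf : f v0 != f v1 by rewrite (inj_eq fi).
rewrite (fs _ _ nv); have := up1_pair nf; have := wide_pair nf.
case: (sameF _ _) => /= H1 H2; case: H1 => h1 h2; case: H2 => h3 h4.
- split; split => H.
  + exact: h4.
  + done.
  + by case: H.
  + by move: (h1 H).
- split; split => H.
  + done.
  + by move: (h3 H).
  + exact: h2.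
  + done.
Qed.
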